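(* Let $n$ be the least counterexample to Robin's inequality, i.e. the least integer $n>5040$ with $\sigma(n)\ge e^{\gamma} n\log\log n$ (assuming such an integer exists). Let $p_r$ denote the largest prime divisor of $n$. Then $\log n> p_r$.
   Context: $\sigma(n)=\sum_{d\mid n} d$ is the sum-of-divisors function, $\gamma$ is the Euler–Mascheroni constant, and $\log$ is the natural logarithm. Robin's inequality (RI) for an integer $n>5040$ is $\sigma(n)<e^{\gamma} n\log\log n$. *)

(* Defs.v *)
From Stdlib Require Import Reals.
From Coquelicot Require Import Coquelicot.
From mathcomp Require Import ssreflect ssrbool ssrnat seq prime bigop.

Definition euler_gamma : R :=
  real (Lim_seq (fun N : nat =>
    (sum_f_R0 (fun k => / INR (k + 1)) N - ln (INR (N + 1)))%R)).

Definition sigma (n : nat) : nat := (\sum_(d <- divisors n) d)%N.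

Definition RI (n : nat) : Prop :=
  (INR (sigma n) < exp euler_gamma * INR n * ln (ln (INR n)))%R.

(* Main.v *)
Require Import Defs.
From Stdlib Require Import Reals Lra ZArith Lia.
From Coquelicot Require Rbar Lim_seq.
From mathcomp Require Import ssreflect ssrbool ssrnat prime.
From mathcomp Require Import eqtype seq div bigop zify.
Lemma sigma_mul_prime p m : prime p -> (0 < m)%N -> (Defs.sigma (p * m) <= p.+1 * Defs.sigma m)%N.
Proof.
move=> pp m0.
have pm0 : (0 < p * m)%N by rewrite muln_gt0 prime_gt0.
rewrite /Defs.sigma.
apply: (@leq_trans (\sum_(d <- divisors m ++ map (muln p) (divisors m)) d)).
  apply: (@sub_le_big_seq nat addn leq leqnn (fun x y => leq_addr y x)).
  move=> i.
  rewrite count_uniq_mem ?divisors_uniq //.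
  case Hi: (i \in divisors (p * m)) => //=.
  rewrite -has_count has_pred1 mem_cat.
  move: Hi; rewrite -dvdn_divisors // => Hi.
  case Hpi: (p %| i).
    move/dvdnP: Hpi => [k Hk]; subst i.
    apply/orP; right; apply/mapP; exists k; last by rewrite mulnC.
    by rewrite -dvdn_divisors // -(dvdn_pmul2r (prime_gt0 pp)) [m * p]mulnC.
  apply/orP; left; rewrite -dvdn_divisors //.
  have cip : coprime i p by rewrite coprime_sym prime_coprime // Hpi.
  by rewrite -(Gauss_dvdr m cip).
rewrite big_cat big_map -big_distrr /= mulSn.
by [].
Qed.

Definition sZ m := foldr (fun d acc => (Z.of_nat d + acc)%Z) 0%Z (divisors m).
Lemma sZ_sigma m : sZ m = Z.of_nat (Defs.sigma m).
Proof.
rewrite /sZ /Defs.sigma; elim: (divisors m) => [|d s IH] /=; first by rewrite big_nil.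
by rewrite big_cons IH; lia.
Qed.

Definition Cof (x : Z) : Z :=
  if (55440 <=? x)%Z then 4218350%Z else
  if (27720 <=? x)%Z then 4101860%Z else
  if (9240 <=? x)%Z then 3902415%Z else 3780630%Z.

Definition chk (m : nat) : bool :=
  let zm := Z.of_nat m in
  let q := Z.max 11 (5040 / zm + 1) in
  ((q + 1) * sZ m * 1000000 <? Cof (zm * q) * zm * q)%Z.

Lemma allchk : all chk (iota 1 5040).
Proof. Time vm_compute. reflexivity. Qed.
Open Scope R_scope.

Lemma exp_lo_base y a : a <= 1 + y -> a <= exp y.
Proof. move: (exp_ineq1_le y); lra. Qed.
Lemma exp_lo_step y a b : 0 <= a -> a <= exp y -> b <= a * a -> b <= exp (2 * y).
Proof.
intros Ha Hy Hb. replace (2*y) with (y+y) by lra. rewrite exp_plus.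
apply Rle_trans with (a*a); auto. apply Rmult_le_compat; lra.
Qed.
Lemma exp_hi_base y a : y < 1 -> / (1 - y) <= a -> exp y <= a.
Proof.
intros Hy Ha. have H := exp_ineq1_le (- y). 
have He : exp y = / exp (- y) by rewrite exp_Ropp Rinv_inv.
rewrite He. apply Rle_trans with (/ (1 - y)); auto.
apply Rinv_le_contravar; lra.
Qed.
Lemma exp_hi_step y a b : exp y <= a -> a * a <= b -> exp (2 * y) <= b.
Proof.
intros Hy Hb. replace (2*y) with (y+y) by lra. rewrite exp_plus.
have := exp_pos y. intros. apply Rle_trans with (a*a); auto. apply Rmult_le_compat; lra.
Qed.
Lemma lo_ln64 : 64 <= exp 4.159.
Proof.
  replace 4.159 with (2*(2*(2*(2*(2*(2*(2*(2*(2*(2*(2*(2*(2*(2*(2*(2*(2*(2*(2*(2*(2*(2*(4.159/4194304))))))))))))))))))))))) by lra.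
  apply (exp_lo_step _ 8.0004594296805847); [lra| |lra].
  apply (exp_lo_step _ 2.8285083400408394); [lra| |lra].
  apply (exp_lo_step _ 1.6818169757856648); [lra| |lra].
  apply (exp_lo_step _ 1.2968488638949663); [lra| |lra].
  apply (exp_lo_step _ 1.1387927220943091); [lra| |lra].
  apply (exp_lo_step _ 1.0671423157640733); [lra| |lra].
  apply (exp_lo_step _ 1.0330258059526264); [lra| |lra].
  apply (exp_lo_step _ 1.0163787709080835); [lra| |lra].
  apply (exp_lo_step _ 1.0081561242724678); [lra| |lra].
  apply (exp_lo_step _ 1.0040697805792523); [lra| |lra].
  apply (exp_lo_step _ 1.0020328241027099); [lra| |lra].
  apply (exp_lo_step _ 1.0010158960289841); [lra| |lra].
  apply (exp_lo_step _ 1.0005078190743859); [lra| |lra].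
  apply (exp_lo_step _ 1.0002538773103486); [lra| |lra].
  apply (exp_lo_step _ 1.0001269305994858); [lra| |lra].
  apply (exp_lo_step _ 1.0000634632859486); [lra| |lra].
  apply (exp_lo_step _ 1.0000317311395417); [lra| |lra].
  apply (exp_lo_step _ 1.0000158654439147); [lra| |lra].
  apply (exp_lo_step _ 1.0000079326904936); [lra| |lra].
  apply (exp_lo_step _ 1.0000039663373809); [lra| |lra].
  apply (exp_lo_step _ 1.0000019831667240); [lra| |lra].
  apply (exp_lo_step _ 1.0000009915828704); [lra| |lra].
  apply exp_lo_base; lra.
Qed.

Lemma lo_c : 1.765 <= exp 0.5692.
Proof.
  replace 0.5692 with (2*(2*(2*(2*(2*(2*(2*(2*(2*(2*(2*(2*(2*(2*(2*(2*(2*(2*(2*(2*(2*(2*(0.5692/4194304))))))))))))))))))))))) by lra.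
  apply (exp_lo_step _ 1.3292302038285206); [lra| |lra].
  apply (exp_lo_step _ 1.1529224621927186); [lra| |lra].
  apply (exp_lo_step _ 1.0737422699105771); [lra| |lra].
  apply (exp_lo_step _ 1.0362153588470773); [lra| |lra].
  apply (exp_lo_step _ 1.0179466385066937); [lra| |lra].
  apply (exp_lo_step _ 1.0089334162900413); [lra| |lra].
  apply (exp_lo_step _ 1.0044567767156740); [lra| |lra].
  apply (exp_lo_step _ 1.0022259110179072); [lra| |lra].
  apply (exp_lo_step _ 1.0011123368623060); [lra| |lra].
  apply (exp_lo_step _ 1.0005560138554493); [lra| |lra].
  apply (exp_lo_step _ 1.0002779682945383); [lra| |lra].
  apply (exp_lo_step _ 1.0001389744903147); [lra| |lra].
  apply (exp_lo_step _ 1.0000694848310865); [lra| |lra].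
  apply (exp_lo_step _ 1.0000347418120465); [lra| |lra].
  apply (exp_lo_step _ 1.0000173707551517); [lra| |lra].
  apply (exp_lo_step _ 1.0000086853398583); [lra| |lra].
  apply (exp_lo_step _ 1.0000043426604998); [lra| |lra].
  apply (exp_lo_step _ 1.0000021713278926); [lra| |lra].
  apply (exp_lo_step _ 1.0000010856633570); [lra| |lra].
  apply (exp_lo_step _ 1.0000005428315312); [lra| |lra].
  apply (exp_lo_step _ 1.0000002714157288); [lra| |lra].
  apply (exp_lo_step _ 1.0000001357078552); [lra| |lra].
  apply exp_lo_base; lra.
Qed.

Lemma hi_u0 : exp 8.52 <= 5041.
Proof.
  replace 8.52 with (2*(2*(2*(2*(2*(2*(2*(2*(2*(2*(2*(2*(2*(2*(2*(2*(2*(2*(2*(2*(8.52/1048576))))))))))))))))))))) by lra.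
  apply (exp_hi_step _ 70.8112089778060744); [|lra].
  apply (exp_hi_step _ 8.4149396300749582); [|lra].
  apply (exp_hi_step _ 2.9008515353383665); [|lra].
  apply (exp_hi_step _ 1.7031886376260166); [|lra].
  apply (exp_hi_step _ 1.3050626949024390); [|lra].
  apply (exp_hi_step _ 1.1423934063633416); [|lra].
  apply (exp_hi_step _ 1.0688280527584133); [|lra].
  apply (exp_hi_step _ 1.0338414059992051); [|lra].
  apply (exp_hi_step _ 1.0167799201396559); [|lra].
  apply (exp_hi_step _ 1.0083550565845623); [|lra].
  apply (exp_hi_step _ 1.0041688386842933); [|lra].
  apply (exp_hi_step _ 1.0020822514565824); [|lra].
  apply (exp_hi_step _ 1.0010405843204272); [|lra].
  apply (exp_hi_step _ 1.0005201568786244); [|lra].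
  apply (exp_hi_step _ 1.0002600446277080); [|lra].
  apply (exp_hi_step _ 1.0001300138620518); [|lra].
  apply (exp_hi_step _ 1.0000650048182127); [|lra].
  apply (exp_hi_step _ 1.0000325018809202); [|lra].
  apply (exp_hi_step _ 1.0000162508084157); [|lra].
  apply (exp_hi_step _ 1.0000081253711970); [|lra].
  apply exp_hi_base; lra.
Qed.

Lemma hi_l0 : exp 2.142 <= 8.52.
Proof.
  replace 2.142 with (2*(2*(2*(2*(2*(2*(2*(2*(2*(2*(2*(2*(2*(2*(2*(2*(2*(2*(2*(2*(2.142/1048576))))))))))))))))))))) by lra.
  apply (exp_hi_step _ 2.9182995301492470); [|lra].
  apply (exp_hi_step _ 1.7083031142479507); [|lra].
  apply (exp_hi_step _ 1.3070207015376423); [|lra].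
  apply (exp_hi_step _ 1.1432500608080641); [|lra].
  apply (exp_hi_step _ 1.0692287224013691); [|lra].
  apply (exp_hi_step _ 1.0340351649733045); [|lra].
  apply (exp_hi_step _ 1.0168751963605487); [|lra].
  apply (exp_hi_step _ 1.0084022988671479); [|lra].
  apply (exp_hi_step _ 1.0041923614861586); [|lra].
  apply (exp_hi_step _ 1.0020939883494754); [|lra].
  apply (exp_hi_step _ 1.0010464466494426); [|lra].
  apply (exp_hi_step _ 1.0005230865149702); [|lra].
  apply (exp_hi_step _ 1.0002615090639898); [|lra].
  apply (exp_hi_step _ 1.0001307459847386); [|lra].
  apply (exp_hi_step _ 1.0000653708556949); [|lra].
  apply (exp_hi_step _ 1.0000326848936963); [|lra].
  apply (exp_hi_step _ 1.0000163423133125); [|lra].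
  apply (exp_hi_step _ 1.0000081711232726); [|lra].
  apply (exp_hi_step _ 1.0000040855532904); [|lra].
  apply (exp_hi_step _ 1.0000020427745587); [|lra].
  apply exp_hi_base; lra.
Qed.

Lemma hi_u1 : exp 9.13 <= 9240.
Proof.
  replace 9.13 with (2*(2*(2*(2*(2*(2*(2*(2*(2*(2*(2*(2*(2*(2*(2*(2*(2*(2*(2*(2*(9.13/1048576))))))))))))))))))))) by lra.
  apply (exp_hi_step _ 96.0645031850892034); [|lra].
  apply (exp_hi_step _ 9.8012500827746051); [|lra].
  apply (exp_hi_step _ 3.1306948242801637); [|lra].
  apply (exp_hi_step _ 1.7693769593504273); [|lra].
  apply (exp_hi_step _ 1.3301792959411251); [|lra].
  apply (exp_hi_step _ 1.1533339914964464); [|lra].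
  apply (exp_hi_step _ 1.0739338859987827); [|lra].
  apply (exp_hi_step _ 1.0363078143094274); [|lra].
  apply (exp_hi_step _ 1.0179920502191691); [|lra].
  apply (exp_hi_step _ 1.0089559208504448); [|lra].
  apply (exp_hi_step _ 1.0044679790070188); [|lra].
  apply (exp_hi_step _ 1.0022314997080359); [|lra].
  apply (exp_hi_step _ 1.0011151280986797); [|lra].
  apply (exp_hi_step _ 1.0005574086971120); [|lra].
  apply (exp_hi_step _ 1.0002786655213196); [|lra].
  apply (exp_hi_step _ 1.0001393230552029); [|lra].
  apply (exp_hi_step _ 1.0000696591014062); [|lra].
  apply (exp_hi_step _ 1.0000348289441754); [|lra].
  apply (exp_hi_step _ 1.0000174143204584); [|lra].
  apply (exp_hi_step _ 1.0000087071223222); [|lra].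
  apply exp_hi_base; lra.
Qed.

Lemma hi_l1 : exp 2.211 <= 9.13.
Proof.
  replace 2.211 with (2*(2*(2*(2*(2*(2*(2*(2*(2*(2*(2*(2*(2*(2*(2*(2*(2*(2*(2*(2*(2.211/1048576))))))))))))))))))))) by lra.
  apply (exp_hi_step _ 3.0207379793785759); [|lra].
  apply (exp_hi_step _ 1.7380270364348697); [|lra].
  apply (exp_hi_step _ 1.3183425338032865); [|lra].
  apply (exp_hi_step _ 1.1481909831571081); [|lra].
  apply (exp_hi_step _ 1.0715367390608257); [|lra].
  apply (exp_hi_step _ 1.0351505876252139); [|lra].
  apply (exp_hi_step _ 1.0174235045570816); [|lra].
  apply (exp_hi_step _ 1.0086741319956022); [|lra].
  apply (exp_hi_step _ 1.0043277014976746); [|lra].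
  apply (exp_hi_step _ 1.0021615146759900); [|lra].
  apply (exp_hi_step _ 1.0010801739501137); [|lra].
  apply (exp_hi_step _ 1.0005399412068034); [|lra].
  apply (exp_hi_step _ 1.0002699341711733); [|lra].
  apply (exp_hi_step _ 1.0001349579787586); [|lra].
  apply (exp_hi_step _ 1.0000674767128259); [|lra].
  apply (exp_hi_step _ 1.0000337377872938); [|lra].
  apply (exp_hi_step _ 1.0000168687513695); [|lra].
  apply (exp_hi_step _ 1.0000084343401157); [|lra].
  apply (exp_hi_step _ 1.0000042171611656); [|lra].
  apply (exp_hi_step _ 1.0000021085783597); [|lra].
  apply exp_hi_base; lra.
Qed.

Lemma hi_u2 : exp 10.22 <= 27720.
Proof.
  replace 10.22 with (2*(2*(2*(2*(2*(2*(2*(2*(2*(2*(2*(2*(2*(2*(2*(2*(2*(2*(2*(2*(10.22/1048576))))))))))))))))))))) by lra.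
  apply (exp_hi_step _ 165.6744805561315835); [|lra].
  apply (exp_hi_step _ 12.8714599232616804); [|lra].
  apply (exp_hi_step _ 3.5876816920208627); [|lra].
  apply (exp_hi_step _ 1.8941176552740494); [|lra].
  apply (exp_hi_step _ 1.3762694704432157); [|lra].
  apply (exp_hi_step _ 1.1731451190893715); [|lra].
  apply (exp_hi_step _ 1.0831182387391376); [|lra].
  apply (exp_hi_step _ 1.0407296665028520); [|lra].
  apply (exp_hi_step _ 1.0201615884274667); [|lra].
  apply (exp_hi_step _ 1.0100304888603446); [|lra].
  apply (exp_hi_step _ 1.0050027307725808); [|lra].
  apply (exp_hi_step _ 1.0024982447728179); [|lra].
  apply (exp_hi_step _ 1.0012483432060289); [|lra].
  apply (exp_hi_step _ 1.0006239769294102); [|lra].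
  apply (exp_hi_step _ 1.0003119398114821); [|lra].
  apply (exp_hi_step _ 1.0001559577443320); [|lra].
  apply (exp_hi_step _ 1.0000779758320508); [|lra].
  apply (exp_hi_step _ 1.0000389871560262); [|lra].
  apply (exp_hi_step _ 1.0000194933880170); [|lra].
  apply (exp_hi_step _ 1.0000097466465099); [|lra].
  apply exp_hi_base; lra.
Qed.

Lemma hi_l2 : exp 2.324 <= 10.22.
Proof.
  replace 2.324 with (2*(2*(2*(2*(2*(2*(2*(2*(2*(2*(2*(2*(2*(2*(2*(2*(2*(2*(2*(2*(2.324/1048576))))))))))))))))))))) by lra.
  apply (exp_hi_step _ 3.1963236427347117); [|lra].
  apply (exp_hi_step _ 1.7878265136010014); [|lra].
  apply (exp_hi_step _ 1.3370962992997181); [|lra].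
  apply (exp_hi_step _ 1.1563288024172528); [|lra].
  apply (exp_hi_step _ 1.0753273001357553); [|lra].
  apply (exp_hi_step _ 1.0369798937953210); [|lra].
  apply (exp_hi_step _ 1.0183220972734123); [|lra].
  apply (exp_hi_step _ 1.0091194663038724); [|lra].
  apply (exp_hi_step _ 1.0045493847013557); [|lra].
  apply (exp_hi_step _ 1.0022721111062383); [|lra].
  apply (exp_hi_step _ 1.0011354109740791); [|lra].
  apply (exp_hi_step _ 1.0005675444336974); [|lra].
  apply (exp_hi_step _ 1.0002837319649347); [|lra].
  apply (exp_hi_step _ 1.0001418559209162); [|lra].
  apply (exp_hi_step _ 1.0000709254452487); [|lra].
  apply (exp_hi_step _ 1.0000354620938443); [|lra].
  apply (exp_hi_step _ 1.0000177308897299); [|lra].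
  apply (exp_hi_step _ 1.0000088654055672); [|lra].
  apply (exp_hi_step _ 1.0000044326929592); [|lra].
  apply (exp_hi_step _ 1.0000022163440235); [|lra].
  apply exp_hi_base; lra.
Qed.

Lemma hi_u3 : exp 10.92 <= 55440.
Proof.
  replace 10.92 with (2*(2*(2*(2*(2*(2*(2*(2*(2*(2*(2*(2*(2*(2*(2*(2*(2*(2*(2*(2*(10.92/1048576))))))))))))))))))))) by lra.
  apply (exp_hi_step _ 235.1041084711525559); [|lra].
  apply (exp_hi_step _ 15.3331049846778443); [|lra].
  apply (exp_hi_step _ 3.9157508838890459); [|lra].
  apply (exp_hi_step _ 1.9788256325126390); [|lra].
  apply (exp_hi_step _ 1.4067073727370021); [|lra].
  apply (exp_hi_step _ 1.1860469521637843); [|lra].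
  apply (exp_hi_step _ 1.0890578277409259); [|lra].
  apply (exp_hi_step _ 1.0435793346655183); [|lra].
  apply (exp_hi_step _ 1.0215573085566557); [|lra].
  apply (exp_hi_step _ 1.0107211824022764); [|lra].
  apply (exp_hi_step _ 1.0053462997406796); [|lra].
  apply (exp_hi_step _ 1.0026695865242346); [|lra].
  apply (exp_hi_step _ 1.0013339036126933); [|lra].
  apply (exp_hi_step _ 1.0006667295422054); [|lra].
  apply (exp_hi_step _ 1.0003333092235834); [|lra].
  apply (exp_hi_step _ 1.0001666407272257); [|lra].
  apply (exp_hi_step _ 1.0000833168927605); [|lra].
  apply (exp_hi_step _ 1.0000416575787033); [|lra].
  apply (exp_hi_step _ 1.0000208285724369); [|lra].
  apply (exp_hi_step _ 1.0000104142319903); [|lra].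
  apply exp_hi_base; lra.
Qed.

Lemma hi_l3 : exp 2.39 <= 10.92.
Proof.
  replace 2.39 with (2*(2*(2*(2*(2*(2*(2*(2*(2*(2*(2*(2*(2*(2*(2*(2*(2*(2*(2*(2*(2.39/1048576))))))))))))))))))))) by lra.
  apply (exp_hi_step _ 3.3035622697200175); [|lra].
  apply (exp_hi_step _ 1.8175704304703071); [|lra].
  apply (exp_hi_step _ 1.3481729972337775); [|lra].
  apply (exp_hi_step _ 1.1611085208686471); [|lra].
  apply (exp_hi_step _ 1.0775474564345865); [|lra].
  apply (exp_hi_step _ 1.0380498333098399); [|lra].
  apply (exp_hi_step _ 1.0188473061798023); [|lra].
  apply (exp_hi_step _ 1.0093796640411388); [|lra].
  apply (exp_hi_step _ 1.0046788860333130); [|lra].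
  apply (exp_hi_step _ 1.0023367129030608); [|lra].
  apply (exp_hi_step _ 1.0011676747194052); [|lra].
  apply (exp_hi_step _ 1.0005836670261039); [|lra].
  apply (exp_hi_step _ 1.0002917909420750); [|lra].
  apply (exp_hi_step _ 1.0001458848298457); [|lra].
  apply (exp_hi_step _ 1.0000729397548189); [|lra].
  apply (exp_hi_step _ 1.0000364692124077); [|lra].
  apply (exp_hi_step _ 1.0000182344399564); [|lra].
  apply (exp_hi_step _ 1.0000091171784167); [|lra].
  apply (exp_hi_step _ 1.0000045585788180); [|lra].
  apply (exp_hi_step _ 1.0000022792868114); [|lra].
  apply exp_hi_base; lra.
Qed.

Lemma ln_div' x y : 0 < x -> 0 < y -> ln (x / y) = ln x - ln y.
Proof. move=> Hx Hy; rewrite /Rdiv ln_mult ?ln_Rinv //; try lra; by apply Rinv_0_lt_compat. Qed.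
Lemma ln_le' x y : 0 < x -> x <= y -> ln x <= ln y.
Proof. move=> Hx [H|->]; [apply Rlt_le, ln_increasing; lra | lra]. Qed.
Lemma exp_le' x y : x <= y -> exp x <= exp y.
Proof. move=> [H|->]; [apply Rlt_le, exp_increasing; lra | lra]. Qed.

Lemma ln_le_sub1 x : 0 < x -> ln x <= x - 1.
Proof. move=> Hx; have := exp_ineq1_le (ln x); rewrite exp_ln //; lra. Qed.

Definition Hs N := sum_f_R0 (fun k => / INR (k+1)) N.
Definition aS N := Hs N - ln (INR (N+1)).
Definition bS N := Hs N - ln (INR (N+2)).

Lemma INR_add1 N : INR (N + 1) = INR N + 1.
Proof. by rewrite plus_INR. Qed.
Lemma INR_add2 N : INR (N + 2) = INR N + 2.
Proof. rewrite plus_INR; simpl; lra. Qed.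

Lemma Hs_S N : Hs (S N) = Hs N + / (INR N + 2).
Proof. rewrite /Hs.
change (sum_f_R0 (fun k => / INR (k+1)) (S N)) with (sum_f_R0 (fun k => / INR (k+1)) N + / INR (S N + 1)).
rewrite plus_INR S_INR. change (INR 1) with 1. f_equal; f_equal; lra. Qed.

Lemma ln_step y : 0 < y -> ln (y + 1) - ln y <= / y.
Proof.
move=> Hy. rewrite -ln_div'; try lra.
have H := ln_le_sub1 ((y+1)/y) ltac:(apply Rdiv_lt_0_compat; lra).
replace ((y+1)/y - 1) with (/ y) in H by (field; lra). done.
Qed.

Lemma ln_step2 y : 0 < y -> / (y + 1) <= ln (y + 1) - ln y.
Proof.
move=> Hy. 
have H := ln_le_sub1 (y/(y+1)) ltac:(apply Rdiv_lt_0_compat; lra).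
rewrite ln_div' in H; try lra.
replace (y/(y+1) - 1) with (- / (y+1)) in H by (field; lra). lra.
Qed.

Lemma pos_INR_S N : 0 < INR N + 1.
Proof. have := pos_INR N; lra. Qed.

Lemma bS_incr N : bS N <= bS (S N).
Proof.
rewrite /bS Hs_S INR_add2 INR_add2 S_INR.
have := pos_INR N => HN.
have := ln_step (INR N + 2) ltac:(lra).
replace (INR N + 2 + 1) with (INR N + 1 + 2) by lra. lra.
Qed.

Lemma bS_mono K d : bS K <= bS (K + d).
Proof.
elim: d => [|d IH]; first by rewrite addn0; lra.
apply: Rle_trans IH _. rewrite addnS. apply bS_incr.
Qed.

Lemma bS_le_aS N : bS N <= aS N.
Proof.
rewrite /bS /aS INR_add1 INR_add2.
have := pos_INR N => HN.
have : ln (INR N + 1) <= ln (INR N + 2) by apply ln_le'; lra.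
lra.
Qed.

Lemma aS_le1 N : aS N <= 1.
Proof.
elim: N => [|N IH].
  rewrite /aS /Hs /= ln_1; lra.
apply: Rle_trans _ IH.
rewrite /aS Hs_S INR_add1 INR_add1 S_INR.
have := pos_INR N => HN.
have := ln_step2 (INR N + 1) ltac:(lra).
replace (INR N + 1 + 1) with (INR N + 2) by lra. lra.
Qed.

Lemma gamma_ge K : bS K <= euler_gamma.
Proof.
have HL : Rbar.Rbar_le (Lim_seq.Lim_seq (fun _ => bS K)) (Lim_seq.Lim_seq aS).
  apply Lim_seq.Lim_seq_le_loc. exists K => n Hn.
  apply: Rle_trans (bS_le_aS n).
  have E : (K + (n - K))%N = n by apply: subnKC; apply/leP. rewrite -E.
  apply bS_mono.
have HU : Rbar.Rbar_le (Lim_seq.Lim_seq aS) (Lim_seq.Lim_seq (fun _ => 1)).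
  apply Lim_seq.Lim_seq_le_loc. exists 0%N => n _. apply aS_le1.
rewrite Lim_seq.Lim_seq_const in HL. rewrite Lim_seq.Lim_seq_const in HU.
rewrite /euler_gamma.
have -> : (fun N : nat => sum_f_R0 (fun k : nat => / INR (k + 1)) N - ln (INR (N + 1))) = aS by [].
move: HL HU. case: (Lim_seq.Lim_seq aS) => //=.
Qed.

Lemma H62 : 4.7282 <= Hs 62.
Proof. rewrite /Hs. cbn [sum_f_R0]; rewrite !INR_IZR_INZ -!plusE; cbn -[IZR Rinv Rplus]; lra. Qed.

Lemma gamma_lb : 0.5692 <= euler_gamma.
Proof.
apply: Rle_trans (gamma_ge 62).
have H := H62.
have E : INR (62 + 2) = 64 by rewrite INR_IZR_INZ -plusE.
have : ln (INR (62+2)) <= 4.159.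
  rewrite E. have := ln_le' 64 (exp 4.159) ltac:(lra) lo_ln64. by rewrite ln_exp.
rewrite /bS. lra.
Qed.

Lemma E_lb : 1.765 <= exp euler_gamma.
Proof. apply: Rle_trans lo_c _. apply exp_le'. apply gamma_lb. Qed.

Lemma loglog_ge T u l x : exp u <= T -> exp l <= u -> T <= x -> l <= ln (ln x).
Proof.
move=> H1 H2 H3.
have Hu : 0 < u by have := exp_pos l; lra.
have HT : 0 < T by have := exp_pos u; lra.
have Hlx : u <= ln x.
  rewrite -(ln_exp u). apply ln_le'; [apply exp_pos| lra].
rewrite -(ln_exp l). apply ln_le'; [apply exp_pos| lra].
Qed.

Lemma Cof_ok (x : Z) (X : R) : (5041 <= x)%Z -> IZR x <= X ->
  IZR (Cof x) <= 1765000 * ln (ln X).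
Proof.
move=> Hx HX.
have HX' : forall k : Z, (k <= x)%Z -> IZR k <= X.
  move=> k Hk. apply: Rle_trans HX. by apply IZR_le.
rewrite /Cof.
case: (Z.leb_spec 55440 x) => H1.
  have := loglog_ge _ _ _ _ hi_u3 hi_l3 (HX' _ H1). lra.
case: (Z.leb_spec 27720 x) => H2.
  have := loglog_ge _ _ _ _ hi_u2 hi_l2 (HX' _ H2). lra.
case: (Z.leb_spec 9240 x) => H3.
  have := loglog_ge _ _ _ _ hi_u1 hi_l1 (HX' _ H3). lra.
have := loglog_ge _ _ _ _ hi_u0 hi_l0 (HX' _ Hx). lra.
Qed.

Lemma INR_mul (a b : nat) : INR (a * b)%N = INR a * INR b.
Proof. by rewrite -multE mult_INR. Qed.

Lemma generic_case (P M E S Sn : R) :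
  2 <= P -> 5040 < M -> 0 < E ->
  ln (P * M) <= P ->
  E * (P * M) * ln (ln (P * M)) <= Sn ->
  Sn <= (P + 1) * S ->
  S < E * M * ln (ln M) -> False.
Proof.
move=> HP HM HE Hge HSn HS HSm.
have HM1 : 1 < M by lra.
have Hl : 0 < ln M by rewrite -ln_1; apply ln_increasing; lra.
have HlP : 0 < ln P by rewrite -ln_1; apply ln_increasing; lra.
have HL : ln (P * M) = ln P + ln M by rewrite ln_mult; lra.
rewrite HL in Hge HSn.
set l := ln M in Hl HL Hge HSn HSm *.
set L := ln P + l in Hge HSn HSm *.
have HLpos : 0 < L by rewrite /L; lra.
have H1 : E * M * (P * ln L) < E * M * ((P + 1) * ln l).
  have : (P + 1) * S < (P + 1) * (E * M * ln l) by apply Rmult_lt_compat_l; lra.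
  move=> H. have : E * (P * M) * ln L < (P + 1) * (E * M * ln l) by lra.
  move=> H'. replace (E * M * (P * ln L)) with (E * (P * M) * ln L) by ring.
  replace (E * M * ((P + 1) * ln l)) with ((P + 1) * (E * M * ln l)) by ring. done.
have HEM : 0 < E * M by apply Rmult_lt_0_compat; lra.
have H2 : P * ln L < (P + 1) * ln l by apply (Rmult_lt_reg_l (E * M)).
have H3 : ln (l / L) <= l / L - 1 by apply ln_le_sub1, Rdiv_lt_0_compat.
rewrite ln_div' // in H3.
have H4 : l / L - 1 = - (ln P / L) by rewrite /L; field; lra.
rewrite H4 in H3.
have H5 : ln P <= P * (ln P / L).
  have : 1 <= P / L by apply (Rmult_le_reg_r L); [lra| rewrite /Rdiv Rmult_assoc Rinv_l; lra].
  move=> H. replace (P * (ln P / L)) with (P / L * ln P) by (field; lra). nra.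
have H6 : ln l < ln P by apply ln_increasing; rewrite /L in Hge; lra.
have H7 : P * (ln L - ln l) >= P * (ln P / L) by apply Rmult_ge_compat_l; lra.
nra.
Qed.

Theorem theorem1 (n : nat) :
  (5040 < n)%N -> ~ RI n ->
  (forall m : nat, (5040 < m)%N -> (m < n)%N -> RI m) ->
  (INR (max_pdiv n) < ln (INR n))%R.
Proof.
move=> Hn HnRI Hmin.
have Hn1 : (1 < n)%N by apply: leq_trans Hn.
set p := max_pdiv n.
have pp : prime p by apply: max_pdiv_prime.
have p2 : (2 <= p)%N by apply: prime_gt1.
set m := (n %/ p)%N.
have Hnm : n = (p * m)%N by rewrite /m mulnC divnK //; apply: max_pdiv_dvd.
have m0 : (0 < m)%N by move: Hn; rewrite Hnm; case: (m) => //; rewrite muln0.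
destruct (Rlt_or_le (INR p) (ln (INR n))) as [H|Hge]; first done.
exfalso.
have Hsig := sigma_mul_prime p m pp m0. rewrite -Hnm in Hsig.
have HE := E_lb.
have HsigR : INR (Defs.sigma n) <= (INR p + 1) * INR (Defs.sigma m).
  rewrite -S_INR -INR_mul. by apply le_INR; apply/leP.
have HnR : INR n = INR p * INR m by rewrite Hnm INR_mul.
have HnRI' : exp euler_gamma * INR n * ln (ln (INR n)) <= INR (Defs.sigma n).
  apply Rnot_lt_le. exact HnRI.
have Hp2 : 2 <= INR p by have := le_INR _ _ (elimT leP p2); simpl; lra.
case: (ltnP 5040 m) => Hm.
  have Hmn : (m < n)%N.
    rewrite Hnm -{1}(mul1n m) ltn_mul2r m0 /=. by apply: leq_trans p2.
  have HRm := Hmin m Hm Hmn. rewrite /RI in HRm.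
  have HM : 5040 < INR m.
    have := lt_INR _ _ (elimT ltP Hm). rewrite INR_IZR_INZ. by [].
  rewrite HnR in Hge HnRI'.
  apply: (generic_case (INR p) (INR m) (exp euler_gamma) (INR (Defs.sigma m)) (INR (Defs.sigma n))) => //.
  lra.
have HnR5041 : 5041 <= INR n.
  have := le_INR _ _ (elimT leP Hn). rewrite INR_IZR_INZ. by [].
have Hp8 : 8 < INR p.
  apply: Rlt_le_trans Hge.
  have := ln_le' _ _ (exp_pos _) (Rle_trans _ _ _ hi_u0 HnR5041).
  rewrite ln_exp. lra.
have Hp11 : (11 <= p)%N.
  case: (leqP 11 p) => // Hlt.
  have Hp9 : (8 < p)%N.
    case: (leqP p 8) => // Hle. have := le_INR _ _ (elimT leP Hle).
    have E8 : INR 8 = 8 by rewrite INR_IZR_INZ.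
    lra.
  have : (p == 9%N) || (p == 10%N) by lia.
  case/orP => /eqP Hpe; move: pp; by rewrite Hpe.
have Hchk : chk m.
  move/allP: allchk => /(_ m); apply. by rewrite mem_iota m0 add1n ltnS.
move: Hchk. rewrite /chk.
set zm := Z.of_nat m.
set q := Z.max 11 (5040 / zm + 1).
set x := (zm * q)%Z.
move/Z.ltb_spec0 => Hc.
have zm0 : (0 < zm)%Z by rewrite /zm; lia.
have Hmp : (5040 < zm * Z.of_nat p)%Z.
  have : (5040 < p * m)%N by rewrite -Hnm.
  move/ltP/Nat2Z.inj_lt.
  have -> : Z.of_nat 5040 = 5040%Z by vm_compute.
  by rewrite /zm -multE Nat2Z.inj_mul Z.mul_comm.
have Hdiv : (5040 / zm < Z.of_nat p)%Z by apply Z.div_lt_upper_bound.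
have Hqp : (q <= Z.of_nat p)%Z by rewrite /q; lia.
have Hq11 : (11 <= q)%Z by rewrite /q; lia.
have Hx : (5041 <= x)%Z.
  have := Z.mul_succ_div_gt 5040 zm zm0.
  have : (Z.succ (5040 / zm) <= q)%Z by rewrite /q; lia.
  move=> H1 H2. rewrite /x. nia.
have HxX : IZR x <= INR n.
  rewrite HnR !INR_IZR_INZ -mult_IZR. apply IZR_le. rewrite /x -/zm. nia.
have HC := Cof_ok x (INR n) Hx HxX.
rewrite sZ_sigma in Hc.
set C := Cof x in Hc HC.
have HC0 : (0 <= C)%Z.
  rewrite /C /Cof. destruct (55440 <=? x)%Z, (27720 <=? x)%Z, (9240 <=? x)%Z; lia.
have Hc' : ((Z.of_nat p + 1) * Z.of_nat (Defs.sigma m) * 1000000 < C * zm * Z.of_nat p)%Z.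
  have Hs0 : (0 <= Z.of_nat (Defs.sigma m))%Z by lia.
  nia.
have HcR := IZR_lt _ _ Hc'.
rewrite !mult_IZR plus_IZR -!INR_IZR_INZ in HcR.
have Hll : 0 <= ln (ln (INR n)).
  have := loglog_ge _ _ _ _ hi_u0 hi_l0 HnR5041. lra.
have Hpm : 0 <= INR p * INR m by rewrite -HnR; apply pos_INR.
set LL := ln (ln (INR n)) in Hll HC HnRI'.
rewrite HnR in HnRI'.
have H1 : IZR C * (INR m * INR p) <= 1765000 * LL * (INR m * INR p).
  apply Rmult_le_compat_r; [nra| done].
have H3 : 0 <= LL * (INR m * INR p) by apply Rmult_le_pos; nra.
have H2 : 1765000 * LL * (INR m * INR p) <= 1000000 * (exp euler_gamma * (INR p * INR m) * LL).
  nra.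
nra.
Qed.
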